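(* There is a symmetric monoidal dagger equivalence $\mathrm{sHilb}\simeq\mathrm{Hilb}_{\mathbb{Z}/2}$.
   Context: Both categories have as underlying objects finite-dimensional complex $\mathbb{Z}/2$-graded vector spaces $V=V_0\oplus V_1$ equipped with a nondegenerate sesquilinear form for which $V_0\perp V_1$, morphisms the even (degree-preserving) linear maps, dagger the adjoint ($\langle Tv,w\rangle=\langle v,T^\dagger w\rangle$), graded tensor product with Koszul braiding $v\otimes w\mapsto(-1)^{|v||w|}w\otimes v$. In $\mathrm{sHilb}$ the form satisfies $\langle v,w\rangle=(-1)^{|v||w|}\overline{\langle w,v\rangle}$ for homogeneous $v,w$, $\langle v,v\rangle\ge0$ for even $v$ and $\langle v,v\rangle/i\ge0$ for odd $v$, and the tensor product form is $\langle v_1\otimes w_1,v_2\otimes w_2\rangle=(-1)^{|v_2||w_1|}\langle v_1,v_2\rangle\langle w_1,w_2\rangle$. In $\mathrm{Hilb}_{\mathbb{Z}/2}$ the form satisfies $\langle v,w\rangle=\overline{\langle w,v\rangle}$ and $\langle v,v\rangle\ge0$ for all $v$ (an ordinary inner product), and the tensor product form is $\langle v_1\otimes w_1,v_2\otimes w_2\rangle=\langle v_1,v_2\rangle\langle w_1,w_2\rangle$. A symmetric monoidal dagger equivalence is a symmetric monoidal functor which is a dagger functor ($F(f^\dagger)=F(f)^\dagger$) with unitary monoidal structure isomorphisms and which is an equivalence (with inverse of the same kind up to unitary monoidal natural isomorphism). *)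

(* Defs.v *)
From mathcomp Require Import all_boot all_algebra.
From mathcomp Require Import complex.
From mathcomp Require Import Rstruct.
Set Implicit Arguments. Unset Strict Implicit. Unset Printing Implicit Defensive.
Import GRing.Theory Num.Theory.
Local Open Scope ring_scope.

Definition C : numClosedFieldType := (Rdefinitions.R)[i].

(* A finite-dimensional Z/2-graded complex vector space C^idx with a chosen
   homogeneous basis indexed by the finite type [idx] (basis vector i has
   degree [deg i], true = odd), together with the Gram matrix of a
   sesquilinear form. *)
Record gspace := GSpace {
  idx : finType;
  deg : idx -> bool;
  gram : idx -> idx -> C }.
Arguments deg : clear implicits.
Arguments gram : clear implicits.

Definition vec (X : gspace) := idx X -> C.

Definition form (X : gspace) (v w : vec X) : C :=
  \sum_(i : idx X) \sum_(j : idx X) (v i)^* * gram X i j * w j.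

Definition homog (X : gspace) (d : bool) (v : vec X) : Prop :=
  forall i, deg X i != d -> v i = 0.

Definition sign (b : bool) : C := if b then -1 else 1.

Definition graded_form (X : gspace) : Prop :=
  forall i j, deg X i != deg X j -> gram X i j = 0.
Definition nondegenerate (X : gspace) : Prop :=
  (forall v : vec X, (forall w, form v w = 0) -> forall i, v i = 0) /\
  (forall w : vec X, (forall v, form v w = 0) -> forall i, w i = 0).

(* objects of sHilb (super = true) and of Hilb_{Z/2} (super = false) *)
Definition valid (super : bool) (X : gspace) : Prop :=
  graded_form X /\ nondegenerate X /\
  if super then
    (forall d e (v w : vec X), homog d v -> homog e w ->
        form v w = sign (d && e) * (form w v)^*) /\
    (forall v : vec X, homog false v -> 0 <= form v v) /\
    (forall v : vec X, homog true v -> 0 <= form v v / 'i)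
  else
    (forall v w : vec X, form v w = (form w v)^*) /\
    (forall v : vec X, 0 <= form v v).

(* linear maps X -> Y as matrices (rows indexed by Y, columns by X) *)
Record mx (X Y : gspace) := Mx { ent : idx Y -> idx X -> C }.
Arguments Mx : clear implicits.

Definition even (X Y : gspace) (T : mx X Y) : Prop :=
  forall j i, deg Y j != deg X i -> ent T j i = 0.

Definition app (X Y : gspace) (T : mx X Y) (v : vec X) : vec Y :=
  fun j => \sum_(i : idx X) ent T j i * v i.

Definition idm (X : gspace) : mx X X := Mx X X (fun i j => (i == j)%:R).
Definition comp (X Y Z : gspace) (T : mx Y Z) (S : mx X Y) : mx X Z :=
  Mx X Z (fun k i => \sum_(j : idx Y) ent T k j * ent S j i).

Definition is_adjoint (X Y : gspace) (T : mx X Y) (S : mx Y X) : Prop :=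
  forall (v : vec X) (w : vec Y), form (app T v) w = form v (app S w).

Definition unitary (X Y : gspace) (u : mx X Y) : Prop :=
  even u /\ exists v : mx Y X,
    [/\ even v, comp u v = idm Y, comp v u = idm X & is_adjoint u v].

(* monoidal structure: graded tensor product; the tensor product form carries
   the Koszul sign (-1)^{|v2||w1|} exactly in the super case *)
Definition tens (super : bool) (X Y : gspace) : gspace :=
  GSpace (fun p : idx X * idx Y => deg X p.1 (+) deg Y p.2)
         (fun p q : idx X * idx Y =>
            sign [&& super, deg X q.1 & deg Y p.2] * gram X p.1 q.1 * gram Y p.2 q.2).

Definition unitsp : gspace := GSpace (fun _ : unit => false) (fun _ _ => 1).

Definition tensm (s : bool) (X Y X' Y' : gspace) (f : mx X Y) (g : mx X' Y')
  : mx (tens s X X') (tens s Y Y') :=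
  Mx (tens s X X') (tens s Y Y') (fun q p => ent f q.1 p.1 * ent g q.2 p.2).

Definition assoc (s : bool) (X Y Z : gspace)
  : mx (tens s (tens s X Y) Z) (tens s X (tens s Y Z)) :=
  Mx (tens s (tens s X Y) Z) (tens s X (tens s Y Z))
     (fun q p => [&& q.1 == p.1.1, q.2.1 == p.1.2 & q.2.2 == p.2]%:R).

Definition lunit (s : bool) (X : gspace) : mx (tens s unitsp X) X :=
  Mx (tens s unitsp X) X (fun q p => (q == p.2)%:R).
Definition runit (s : bool) (X : gspace) : mx (tens s X unitsp) X :=
  Mx (tens s X unitsp) X (fun q p => (q == p.1)%:R).

Definition braid (s : bool) (X Y : gspace) : mx (tens s X Y) (tens s Y X) :=
  Mx (tens s X Y) (tens s Y X)
     (fun q p => sign (deg X p.1 && deg Y p.2) * ((q.1 == p.2) && (q.2 == p.1))%:R).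

Record SMFunctor (s t : bool) := SMF {
  fo : gspace -> gspace;
  fm : forall X Y, mx X Y -> mx (fo X) (fo Y);
  fJ : forall X Y, mx (tens t (fo X) (fo Y)) (fo (tens s X Y));
  fJ0 : mx unitsp (fo unitsp) }.

Definition is_SMD_functor (s t : bool) (F : SMFunctor s t) : Prop :=
  (forall X, valid s X -> valid t (fo F X)) /\
  (forall X Y (T : mx X Y), valid s X -> valid s Y -> even T -> even (fm F T)) /\
  (forall X, valid s X -> fm F (idm X) = idm (fo F X)) /\
  (forall X Y Z (T : mx Y Z) (S : mx X Y), valid s X -> valid s Y -> valid s Z ->
     even T -> even S -> fm F (comp T S) = comp (fm F T) (fm F S)) /\
  (forall X Y (T : mx X Y) (S : mx Y X), valid s X -> valid s Y ->
     even T -> even S -> is_adjoint T S -> is_adjoint (fm F T) (fm F S)) /\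
  (forall X Y, valid s X -> valid s Y -> unitary (fJ F X Y)) /\
  unitary (fJ0 F) /\
  (forall X Y X' Y' (f : mx X Y) (g : mx X' Y'),
     valid s X -> valid s Y -> valid s X' -> valid s Y' -> even f -> even g ->
     comp (fm F (tensm s f g)) (fJ F X X') = comp (fJ F Y Y') (tensm t (fm F f) (fm F g))) /\
  (forall X Y Z, valid s X -> valid s Y -> valid s Z ->
     comp (fm F (assoc s X Y Z))
          (comp (fJ F (tens s X Y) Z) (tensm t (fJ F X Y) (idm (fo F Z))))
     = comp (fJ F X (tens s Y Z))
          (comp (tensm t (idm (fo F X)) (fJ F Y Z)) (assoc t (fo F X) (fo F Y) (fo F Z)))) /\
  (forall X, valid s X ->
     comp (fm F (lunit s X)) (comp (fJ F unitsp X) (tensm t (fJ0 F) (idm (fo F X))))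
     = lunit t (fo F X)) /\
  (forall X, valid s X ->
     comp (fm F (runit s X)) (comp (fJ F X unitsp) (tensm t (idm (fo F X)) (fJ0 F)))
     = runit t (fo F X)) /\
  (forall X Y, valid s X -> valid s Y ->
     comp (fm F (braid s X Y)) (fJ F X Y) = comp (fJ F Y X) (braid t (fo F X) (fo F Y))).

(* eta : Id ==> G o F is a unitary monoidal natural isomorphism
   (monoidal structure of G o F: J = G(J^F) o J^G, J0 = G(J0^F) o J0^G) *)
Definition unit_iso (s t : bool) (F : SMFunctor s t) (G : SMFunctor t s)
  (eta : forall X, mx X (fo G (fo F X))) : Prop :=
  (forall X, valid s X -> unitary (eta X)) /\
  (forall X Y (f : mx X Y), valid s X -> valid s Y -> even f ->
     comp (eta Y) f = comp (fm G (fm F f)) (eta X)) /\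
  (forall X Y, valid s X -> valid s Y ->
     eta (tens s X Y)
     = comp (fm G (fJ F X Y)) (comp (fJ G (fo F X) (fo F Y)) (tensm s (eta X) (eta Y)))) /\
  eta unitsp = comp (fm G (fJ0 F)) (fJ0 G).

Definition counit_iso (s t : bool) (F : SMFunctor s t) (G : SMFunctor t s)
  (eps : forall Y, mx (fo F (fo G Y)) Y) : Prop :=
  (forall Y, valid t Y -> unitary (eps Y)) /\
  (forall Y Y' (g : mx Y Y'), valid t Y -> valid t Y' -> even g ->
     comp (eps Y') (fm F (fm G g)) = comp g (eps Y)) /\
  (forall Y Y', valid t Y -> valid t Y' ->
     comp (eps (tens t Y Y')) (comp (fm F (fJ G Y Y')) (fJ F (fo G Y) (fo G Y')))
     = tensm t (eps Y) (eps Y')) /\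
  comp (eps unitsp) (comp (fm F (fJ0 G)) (fJ0 F)) = idm unitsp.

Definition SMD_equivalence (s t : bool) : Prop :=
  exists (F : SMFunctor s t) (G : SMFunctor t s)
         (eta : forall X, mx X (fo G (fo F X)))
         (eps : forall Y, mx (fo F (fo G Y)) Y),
    [/\ is_SMD_functor F, is_SMD_functor G, unit_iso eta & counit_iso eps].

Notation sHilb := true.
Notation Hilb_Z2 := false.

(* Main.v *)
Require Import Defs.
From mathcomp Require Import all_boot all_algebra complex Rstruct ring.
From Stdlib Require Import FunctionalExtensionality.
Require Import Defs.
Set Implicit Arguments. Unset Strict Implicit. Unset Printing Implicit Defensive.
Import GRing.Theory Num.Theory.
Local Open Scope ring_scope.

Lemma mx_ext (X Y : gspace) (M N : mx X Y) :
  (forall q p, ent M q p = ent N q p) -> M = N.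
Proof.
case: M => f; case: N => g /= H; congr Mx.
apply: functional_extensionality => q; apply: functional_extensionality => p; exact: H.
Qed.

Lemma sum_deltaL (I : finType) (F : I -> C) (k : I) :
  \sum_j (k == j)%:R * F j = F k.
Proof.
rewrite (bigD1 k) //= eqxx mul1r big1 ?addr0 // => j /negPf.
by rewrite eq_sym => ->; rewrite mul0r.
Qed.

Lemma sum_deltaR (I : finType) (F : I -> C) (k : I) :
  \sum_j F j * (j == k)%:R = F k.
Proof.
rewrite (bigD1 k) //= eqxx mulr1 big1 ?addr0 // => j /negPf ->; exact: mulr0.
Qed.

Lemma comp_dL (X Y Z : gspace) (S : mx Y Z) (T : mx X Y) (f : idx Z -> idx Y) k i :
  (forall k j, ent S k j = (f k == j)%:R) -> ent (comp S T) k i = ent T (f k) i.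
Proof. move=> H /=; under eq_bigr do rewrite H; exact: sum_deltaL. Qed.

Lemma comp_dR (X Y Z : gspace) (T : mx Y Z) (S : mx X Y) (g : idx X -> idx Y) k i :
  (forall j i, ent S j i = (j == g i)%:R) -> ent (comp T S) k i = ent T k (g i).
Proof. move=> H /=; under eq_bigr do rewrite H; exact: sum_deltaR. Qed.

Lemma pair_delta (A B : eqType) (a a' : A) (b b' : B) :
  ((a == a')%:R * (b == b')%:R : C) = ((a, b) == (a', b'))%:R.
Proof. by rewrite xpair_eqE -natrM mulnb. Qed.

Lemma unitary_delta (A B : gspace) (f : idx A -> idx B) (g : idx B -> idx A)
   (u : mx A B) (v : mx B A) :
  cancel f g -> cancel g f ->
  (forall q p, ent u q p = (q == f p)%:R) -> (forall p q, ent v p q = (p == g q)%:R) ->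
  (forall p, deg B (f p) = deg A p) ->
  (forall p p', gram B (f p) (f p') = gram A p p') -> unitary u.
Proof.
move=> fK gK Hu Hv Hd Hg; split.
  move=> q p; rewrite Hu; case: (q =P f p) => [->|//]; by rewrite Hd eqxx.
exists v; split.
- move=> p q; rewrite Hv; case: (p =P g q) => [->|//]; by rewrite -(Hd (g q)) gK eqxx.
- apply: mx_ext => k i; rewrite (@comp_dR _ _ _ _ _ g) // Hu gK //.
- apply: mx_ext => k i; rewrite (@comp_dR _ _ _ _ _ f) // Hv fK //.
move=> x y.
have ax : app u x = fun j => x (g j).
  apply: functional_extensionality => j; rewrite /app.
  under eq_bigr do rewrite Hu.
  rewrite (reindex g) /=; last by exists f => ? _.
  under eq_bigr do rewrite gK.
  by rewrite -[in RHS](gK j) sum_deltaL fK.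
have ay : app v y = fun j => y (f j).
  apply: functional_extensionality => j; rewrite /app.
  under eq_bigr do rewrite Hv.
  rewrite (reindex f) /=; last by exists g => ? _.
  under eq_bigr do rewrite fK.
  by rewrite sum_deltaL.
rewrite ax ay /form (reindex f) /=; last by exists g => ? _.
apply: eq_bigr => i _; rewrite (reindex f) /=; last by exists g => ? _.
apply: eq_bigr => j _; by rewrite !fK Hg.
Qed.

Definition Sc (c : bool -> C) (X : gspace) : gspace :=
  GSpace (deg X) (fun i j => c (deg X i) * gram X i j).

Definition mkF (s t : bool) (c : bool -> C) : SMFunctor s t :=
  @SMF s t (Sc c) (fun X Y T => Mx (Sc c X) (Sc c Y) (ent T))
    (fun X Y => Mx (tens t (Sc c X) (Sc c Y)) (Sc c (tens s X Y)) (fun q p => (q == p)%:R))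
    (Mx unitsp (Sc c unitsp) (fun q p => (q == p)%:R)).

Definition cF (b : bool) : C := if b then - 'i else 1.
Definition cG (b : bool) : C := if b then 'i else 1.

Definition Dsc (c : bool -> C) (X : gspace) (v : vec X) : vec X :=
  fun i => (c (deg X i))^* * v i.

Lemma form_Sc c X (v w : vec X) : @form (Sc c X) v w = @form X (Dsc c v) w.
Proof.
rewrite /form; apply: eq_bigr => i _; apply: eq_bigr => j _.
rewrite /Dsc /= rmorphM /= conjCK; ring.
Qed.

Lemma app_Dsc c X Y (T : mx X Y) v : even T -> app T (Dsc c v) = Dsc c (app T v).
Proof.
move=> eT; apply: functional_extensionality => j; rewrite /app /Dsc mulr_sumr.
apply: eq_bigr => i _; case: (deg Y j =P deg X i) => [->|/eqP ne]; first ring.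
by rewrite eT // !mul0r mulr0.
Qed.

Lemma tens_gram s t c X Y :
  (forall a b, c (a (+) b) * sign [&& s, a & b] = sign [&& t, a & b] * c a * c b) ->
  graded_form X -> graded_form Y ->
  forall p q, gram (Sc c (tens s X Y)) p q = gram (tens t (Sc c X) (Sc c Y)) p q.
Proof.
move=> Ht gX gY [p1 p2] [q1 q2] /=.
case: (deg X p1 =P deg X q1) => [e|/eqP ne]; last by rewrite (gX _ _ ne) !(mulr0, mul0r).
rewrite -e.
transitivity (c (deg X p1 (+) deg Y p2) * sign [&& s, deg X p1 & deg Y p2] *
   (gram X p1 q1 * gram Y p2 q2)); first ring.
rewrite Ht; ring.
Qed.

Lemma eq_unitL (T : eqType) (j l : unit * T) : (j.2 == l.2) = (j == l).
Proof. by case: j l => [[] ?] [[] ?]; rewrite xpair_eqE. Qed.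
Lemma eq_unitR (T : eqType) (j l : T * unit) : (j.1 == l.1) = (j == l).
Proof. by case: j l => [? []] [? []]; rewrite xpair_eqE andbT. Qed.

Ltac dR := erewrite comp_dR; last (by move=> ? ?; reflexivity).
Ltac dL := erewrite comp_dL; last (by move=> ? ?; reflexivity).

Lemma mkF_SMD s t c (Hc0 : c false = 1) (Hv : forall X, valid s X -> valid t (Sc c X))
  (Ht : forall a b, c (a (+) b) * sign [&& s, a & b] = sign [&& t, a & b] * c a * c b) :
  is_SMD_functor (mkF s t c).
Proof.
have grd : forall b X, valid b X -> graded_form X by move=> b X [].
split; first exact: Hv.
split; first by move=> X Y T _ _.
split; first by move=> X _; apply: mx_ext.
split; first by move=> X Y Z T S _ _ _ _ _; apply: mx_ext.
split.
  move=> X Y T S _ _ eT eS adj v w /=.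
  rewrite !form_Sc.
  have -> : app (Mx (Sc c X) (Sc c Y) (ent T)) v = app T v by [].
  have -> : app (Mx (Sc c Y) (Sc c X) (ent S)) w = app S w by [].
  by rewrite -app_Dsc.
split.
  move=> X Y vX vY.
  apply: (@unitary_delta (tens t (Sc c X) (Sc c Y)) (Sc c (tens s X Y)) id id _
     (Mx (Sc c (tens s X Y)) (tens t (Sc c X) (Sc c Y)) (fun q p => (q == p)%:R))) => //.
  move=> p p'; exact: tens_gram (grd _ _ vX) (grd _ _ vY) p p'.
split.
  apply: (@unitary_delta unitsp (Sc c unitsp) id id _
     (Mx (Sc c unitsp) unitsp (fun q p => (q == p)%:R))) => //.
  by move=> p p' /=; rewrite Hc0 mulr1.
split.
  move=> X Y X' Y' f g _ _ _ _ _ _; apply: mx_ext => k i.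
  by dR; dL.
split.
  move=> X Y Z _ _ _; apply: mx_ext => k i.
  erewrite comp_dR; last first.
    move=> j l; dL => /=; rewrite pair_delta.
    rewrite -!surjective_pairing; reflexivity.
  dL; erewrite comp_dL; last first.
    move=> j l /=; rewrite pair_delta.
    rewrite -!surjective_pairing; reflexivity.
  by [].
split.
  move=> X _; apply: mx_ext => k i.
  erewrite comp_dR; last first.
    move=> j l; dL => /=; rewrite mul1r eq_unitL; reflexivity.
  by [].
split.
  move=> X _; apply: mx_ext => k i.
  erewrite comp_dR; last first.
    move=> j l; dL => /=; rewrite mulr1 eq_unitR; reflexivity.
  by [].
move=> X Y _ _; apply: mx_ext => k i.
by dR; dL.
Qed.

Ltac gconj := repeat match goal with |- context [@Num.conj C ?x] => let y := fresh "y" in progress (generalize (@Num.conj C x) => y) end.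
Ltac ringc := gconj; ring.

Lemma i2 : 'i * 'i = -1 :> C.
Proof. by rewrite -expr2 sqrCi. Qed.

Lemma HtF a b : cF (a (+) b) * sign [&& true, a & b] = sign [&& false, a & b] * cF a * cF b.
Proof. case: a; case: b; rewrite /cF /sign /= ?mul1r ?mulr1 //; by rewrite mulrNN i2. Qed.

Lemma HtG a b : cG (a (+) b) * sign [&& false, a & b] = sign [&& true, a & b] * cG a * cG b.
Proof. case: a; case: b; rewrite /cG /sign /= ?mul1r ?mulr1 //; by rewrite -mulrA i2 mulrNN mul1r. Qed.

Lemma cGF b : cG b * cF b = 1.
Proof. case: b; rewrite /cG /cF ?mul1r // mulrN i2 opprK //. Qed.
Lemma cFG b : cF b * cG b = 1.
Proof. by rewrite mulrC cGF. Qed.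

Definition bas (X : gspace) (i : idx X) : vec X := fun k => (k == i)%:R.

Lemma sum_deltaL' (I : finType) (F : I -> C) (k : I) :
  \sum_j (j == k)%:R * F j = F k.
Proof. under eq_bigr do rewrite eq_sym; exact: sum_deltaL. Qed.

Lemma form_bas X i j : form (bas i) (bas j) = gram X i j.
Proof.
rewrite /form /bas.
under eq_bigr do rewrite conjC_nat sum_deltaR.
by rewrite sum_deltaL'.
Qed.

Lemma homog_bas X i : homog (deg X i) (bas i).
Proof. move=> k; rewrite /bas; case: (k =P i) => [->|//]; by rewrite eqxx. Qed.

Lemma herm_form X : (forall i j, gram X i j = (gram X j i)^*) ->
  forall v w : vec X, form v w = (form w v)^*.
Proof.
move=> Hh v w; rewrite /form rmorph_sum exchange_big /=; apply: eq_bigr => i _.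
rewrite rmorph_sum; apply: eq_bigr => j _.
rewrite !rmorphM /= conjCK (Hh j i); ringc.
Qed.

Lemma graded_Sc c X : graded_form X -> graded_form (Sc c X).
Proof. by move=> gX i j /= ne; rewrite (gX _ _ ne) mulr0. Qed.

Lemma nondeg_Sc c X : (forall b, c b != 0) -> nondegenerate X -> nondegenerate (Sc c X).
Proof.
move=> Hc [n1 n2]; split.
  move=> v H i.
  have H' : forall w : vec X, @form X (@Dsc c X v) w = 0 by move=> w; have := H w; rewrite form_Sc.
  have := n1 _ H' i; rewrite /Dsc => /eqP; rewrite mulf_eq0 conjC_eq0 (negbTE (Hc _)) /=.
  by move/eqP.
move=> w H; apply: n2 => u.
have := H (fun i => u i / (c (deg X i))^*); rewrite form_Sc.
have -> // : Dsc c (fun i => u i / (c (deg X i))^*) = u.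
apply: functional_extensionality => i; rewrite /Dsc mulrC divfK //.
by rewrite conjC_eq0.
Qed.

Lemma cF_nz b : cF b != 0.
Proof. case: b; rewrite /cF ?oppr_eq0 ?neq0Ci ?oner_neq0 //. Qed.
Lemma cG_nz b : cG b != 0.
Proof. case: b; rewrite /cG ?neq0Ci ?oner_neq0 //. Qed.

Lemma valid_F X : valid true X -> valid false (Sc cF X).
Proof.
move=> [gX [nX [sh [p0 p1]]]].
split; first exact: graded_Sc.
split; first by apply: nondeg_Sc => //; exact: cF_nz.
have gh : forall i j, gram X i j = sign (deg X i && deg X j) * (gram X j i)^*.
  move=> i j; rewrite -!form_bas; apply: sh; exact: homog_bas.
split.
  apply: herm_form => i j /=.
  case: (deg X i =P deg X j) => [e|/eqP ne]; last first.
    rewrite (gX _ _ ne) (gX j i) ?mulr0 ?conjC0 //; by rewrite eq_sym.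
  rewrite (gh i j) -e andbb rmorphM /=.
  case: (deg X i); rewrite /cF /sign ?conjC1 ?mul1r // rmorphN /= conjCi; ringc.
move=> v.
pose v0 : vec X := fun i => if deg X i then 0 else v i.
pose v1 : vec X := fun i => if deg X i then v i else 0.
have h0 : homog false v0 by move=> i; rewrite /v0; case: (deg X i).
have h1 : homog true v1 by move=> i; rewrite /v1; case: (deg X i).
have -> : @form (Sc cF X) v v = form v0 v0 + form v1 v1 / 'i.
  rewrite /form mulr_suml -big_split; apply: eq_bigr => i _.
  rewrite mulr_suml -big_split; apply: eq_bigr => j _ /=.
  rewrite /v0 /v1.
  case: (deg X i =P deg X j) => [e|/eqP ne]; last first.
    by rewrite (gX _ _ ne); case: (deg X i); case: (deg X j); rewrite /= ?conjC0; ringc.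
  rewrite -e; case: (deg X i); rewrite /cF /= ?conjC0 -?invCi; ringc.
by apply: addr_ge0; [exact: p0 | exact: p1].
Qed.

Lemma cG_key d : cG d = sign (d && d) * (cG d)^*.
Proof. case: d; rewrite /cG /sign /= ?conjC1 ?mul1r // conjCi; ringc. Qed.

Lemma valid_G Y : valid false Y -> valid true (Sc cG Y).
Proof.
move=> [gY [nY [hY pY]]].
split; first exact: graded_Sc.
split; first by apply: nondeg_Sc => //; exact: cG_nz.
have gh : forall i j, gram Y i j = (gram Y j i)^*.
  by move=> i j; rewrite -!form_bas; apply: hY.
split.
  move=> d e v w hv hw.
  rewrite /form rmorph_sum exchange_big mulr_sumr /=; apply: eq_bigr => i _.
  rewrite rmorph_sum mulr_sumr; apply: eq_bigr => j _.
  rewrite !rmorphM /= conjCK.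
  case: (deg Y j =P d) => [dj|/eqP nd]; last by rewrite (hv j nd) conjC0; ringc.
  case: (deg Y i =P e) => [di|/eqP nd]; last by rewrite (hw i nd); ringc.
  rewrite di dj.
  case: (d =P e) => [de|/eqP nde]; last first.
    have ne : deg Y j != deg Y i by rewrite dj di.
    have ne' : deg Y i != deg Y j by rewrite eq_sym.
    rewrite (gY _ _ ne) (gY _ _ ne') conjC0; ringc.
  rewrite -de (gh j i).
  rewrite {1}(cG_key d); ringc.
split.
  move=> v hv.
  have -> : @form (Sc cG Y) v v = @form Y v v; last exact: pY.
  rewrite /form; apply: eq_bigr => i _; apply: eq_bigr => j _ /=.
  case: (deg Y i =P false) => [->|/eqP nd]; last by rewrite (hv i nd) conjC0; ringc.
  rewrite /cG; ringc.
move=> v hv.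
have -> : @form (Sc cG Y) v v = 'i * @form Y v v.
  rewrite /form mulr_sumr; apply: eq_bigr => i _; rewrite mulr_sumr; apply: eq_bigr => j _ /=.
  case: (deg Y i =P true) => [->|/eqP nd]; last by rewrite (hv i nd) conjC0; ringc.
  rewrite /cG; ringc.
by rewrite mulrC mulKf ?neq0Ci //; exact: pY.
Qed.

Definition etaM (X : gspace) : mx X (Sc cG (Sc cF X)) :=
  Mx X (Sc cG (Sc cF X)) (fun q p => (q == p)%:R).
Definition epsM (Y : gspace) : mx (Sc cF (Sc cG Y)) Y :=
  Mx (Sc cF (Sc cG Y)) Y (fun q p => (q == p)%:R).

Theorem mainTheorem8 : SMD_equivalence sHilb Hilb_Z2.
Proof.
exists (mkF true false cF), (mkF false true cG), etaM, epsM.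
split.
- apply: mkF_SMD => //; [exact: valid_F | exact: HtF].
- apply: mkF_SMD => //; [exact: valid_G | exact: HtG].
- split.
    move=> X _.
    apply: (@unitary_delta X (Sc cG (Sc cF X)) id id _
       (Mx (Sc cG (Sc cF X)) X (fun q p => (q == p)%:R))) => //.
    by move=> p p' /=; rewrite mulrA cGF mul1r.
  split; first by move=> X Y f _ _ _; apply: mx_ext => k i; dL; dR.
  split; last by apply: mx_ext => k i; dL.
  move=> X Y _ _; apply: mx_ext => k i; dL; dL => /=.
  by rewrite pair_delta -!surjective_pairing.
- split.
    move=> Y _.
    apply: (@unitary_delta (Sc cF (Sc cG Y)) Y id id _
       (Mx Y (Sc cF (Sc cG Y)) (fun q p => (q == p)%:R))) => //.
    by move=> p p' /=; rewrite mulrA cFG mul1r.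
  split; first by move=> X Y f _ _ _; apply: mx_ext => k i; dL; dR.
  split; last by apply: mx_ext => k i; dL; dL.
  move=> X Y _ _; apply: mx_ext => k i; dL; dL => /=.
  by rewrite pair_delta -!surjective_pairing.
Unshelve. all: exact (fun _ => tt). Qed.
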